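(* Let $H$ be a group, $K\lneq H$, $\phi\in\operatorname{Aut}(H)$, $G=\langle H,t;\ tkt^{-1}=\phi(k),\ k\in K\rangle$. The map $\chi_2:\operatorname{Out}_H^{(V)}(G)\to N_H(K)/Z(H)K$ sending the outer class of $\alpha_{(\gamma_b,a)}$ to $bZ(H)K$ is a well-defined surjective homomorphism with kernel $C_K$.
   Context: $\gamma_b$ denotes $h\mapsto b^{-1}hb$. For $\delta\in\operatorname{Aut}(H)$ and $a\in H$ with $\delta(K)=K$ and $\phi(\delta(k))=a^{-1}\delta(\phi(k))a$ for all $k\in K$, $\alpha_{(\delta,a)}$ denotes the automorphism of $G$ given by $h\mapsto\delta(h)$ ($h\in H$), $t\mapsto at$. $\operatorname{Out}_H^{(V)}(G)$ is the subgroup of $\operatorname{Out}(G)$ consisting of the outer classes of the automorphisms $\alpha_{(\gamma_b,a)}$, where $b\in N_H(K)$, $a\in H$ and $ba\phi(b)^{-1}\in C_H(\phi(K))$. $C_K$ is the subgroup of outer classes of $\alpha_{(1,a)}$ with $a\in C_H(\phi(K))$. Automorphisms are composed left to right. *)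

(* Defs.v *)
Set Implicit Arguments.
Unset Strict Implicit.

Record Group := MkGroup {
  car :> Type;
  gmul : car -> car -> car;
  gone : car;
  ginv : car -> car;
  gmulA : forall x y z, gmul x (gmul y z) = gmul (gmul x y) z;
  gmul1l : forall x, gmul gone x = x;
  gmul1r : forall x, gmul x gone = x;
  gmulVl : forall x, gmul (ginv x) x = gone;
  gmulVr : forall x, gmul x (ginv x) = gone
}.

Arguments gmul {g} x y.
Arguments gone {g}.
Arguments ginv {g} x.

Declare Scope grp_scope.
Delimit Scope grp_scope with grp.
Notation "x * y" := (gmul x y) : grp_scope.
Notation "x ^-1" := (ginv x) (at level 3, left associativity, format "x ^-1") : grp_scope.
Notation "1" := gone : grp_scope.
Open Scope grp_scope.

Definition subgroup (H : Group) (K : H -> Prop) : Prop :=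
  K 1 /\ (forall x y, K x -> K y -> K (x * y)) /\ (forall x, K x -> K (x^-1)).

Definition proper_subgroup (H : Group) (K : H -> Prop) : Prop :=
  subgroup K /\ exists h, ~ K h.

Definition is_hom (A B : Group) (f : A -> B) : Prop :=
  forall x y, f (x * y) = f x * f y.

Definition is_aut (A : Group) (f : A -> A) : Prop :=
  is_hom f /\ exists g : A -> A, (forall x, g (f x) = x) /\ (forall x, f (g x) = x).

Definition gamma (H : Group) (b : H) : H -> H := fun h => b^-1 * h * b.

Definition normalizer (H : Group) (K : H -> Prop) (b : H) : Prop :=
  forall k, K k <-> K (b^-1 * k * b).

Definition centralizer (H : Group) (S : H -> Prop) (c : H) : Prop :=
  forall s, S s -> c * s = s * c.

Definition image (A B : Group) (f : A -> B) (K : A -> Prop) (y : B) : Prop :=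
  exists k, K k /\ f k = y.

Definition center (H : Group) (z : H) : Prop := forall h, z * h = h * z.

(* b Z(H)K = b' Z(H)K, i.e. b^-1 b' in Z(H)K *)
Definition same_cosetZK (H : Group) (K : H -> Prop) (b b' : H) : Prop :=
  exists z k, center z /\ K k /\ b^-1 * b' = z * k.

(* G is the HNN extension <H, t ; t k t^-1 = phi(k), k in K>, characterized
   (up to isomorphism) by its universal property, with i : H -> G the
   canonical map. *)
Definition is_HNN (H : Group) (K : H -> Prop) (phi : H -> H)
  (G : Group) (i : H -> G) (t : G) : Prop :=
  is_hom i /\
  (forall k, K k -> t * i k * t^-1 = i (phi k)) /\
  forall (X : Group) (f : H -> X) (x : X),
    is_hom f -> (forall k, K k -> x * f k * x^-1 = f (phi k)) ->
    exists F : G -> X,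
      is_hom F /\ (forall h, F (i h) = f h) /\ F t = x /\
      forall F' : G -> X, is_hom F' -> (forall h, F' (i h) = f h) -> F' t = x ->
        forall g, F' g = F g.

Definition is_alpha (H G : Group) (i : H -> G) (t : G)
  (delta : H -> H) (a : H) (alpha : G -> G) : Prop :=
  is_aut alpha /\ (forall h, alpha (i h) = i (delta h)) /\ alpha t = i a * t.

Definition in_V (H : Group) (K : H -> Prop) (phi : H -> H) (G : Group)
  (i : H -> G) (t : G) (b a : H) (alpha : G -> G) : Prop :=
  normalizer K b /\ centralizer (image phi K) (b * a * (phi b)^-1) /\
  is_alpha i t (gamma b) a alpha.

Definition same_outer (G : Group) (alpha beta : G -> G) : Prop :=
  exists g : G, forall x, beta x = g^-1 * alpha x * g.

Definition comp_lr (G : Group) (alpha beta : G -> G) : G -> G :=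
  fun x => beta (alpha x).

(* Main.v *)
Require Import Defs.
From Stdlib Require Import Classical ClassicalEpsilon FunctionalExtensionality PropExtensionality List.
Import ListNotations.
Open Scope grp_scope.

Section GL.
Context {G : Group}.
Implicit Types x y z : G.
Lemma mulKV x y : x^-1 * (x * y) = y.
Proof. rewrite gmulA, gmulVl, gmul1l. reflexivity. Qed.
Lemma mulVK x y : x * (x^-1 * y) = y.
Proof. rewrite gmulA, gmulVr, gmul1l. reflexivity. Qed.
Lemma mulcl x y z : x * y = x * z -> y = z.
Proof. intro E. rewrite <- (mulKV x y), E, mulKV. reflexivity. Qed.
Lemma mulcr x y z : y * x = z * x -> y = z.
Proof. intro E. rewrite <- (gmul1r y), <- (gmulVr x), gmulA, E, <- gmulA, gmulVr, gmul1r. reflexivity. Qed.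
Lemma inv_uniq x y : x * y = 1 -> x^-1 = y.
Proof. intro E. apply (mulcl x). rewrite gmulVr, E. reflexivity. Qed.
Lemma inv_inv x : (x^-1)^-1 = x.
Proof. apply inv_uniq. apply gmulVl. Qed.
Lemma inv_mul x y : (x * y)^-1 = y^-1 * x^-1.
Proof. apply inv_uniq. rewrite <- gmulA, (gmulA y), gmulVr, gmul1l, gmulVr. reflexivity. Qed.
Lemma inv_one : (1 : G)^-1 = 1.
Proof. apply inv_uniq. apply gmul1l. Qed.
Lemma mulVKr x y : (y * x^-1) * x = y.
Proof. rewrite <- gmulA, gmulVl, gmul1r. reflexivity. Qed.
Lemma mulKVr x y : (y * x) * x^-1 = y.
Proof. rewrite <- gmulA, gmulVr, gmul1r. reflexivity. Qed.
End GL.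

Lemma hom_one (A B : Group) (f : A -> B) : is_hom f -> f 1 = 1.
Proof. intro Hf. apply (mulcl (f 1)). rewrite <- Hf, !gmul1r. reflexivity. Qed.
Lemma hom_inv (A B : Group) (f : A -> B) x : is_hom f -> f (x^-1) = (f x)^-1.
Proof. intro Hf. symmetry. apply inv_uniq. rewrite <- Hf, gmulVr. apply hom_one; auto. Qed.

Ltac gs := repeat (rewrite ?gmul1l, ?gmul1r, ?gmulVl, ?gmulVr, ?mulKV, ?mulVK, ?inv_inv, ?inv_mul, ?inv_one, <- ?gmulA).

Record perm (T : Type) := MkPerm { pf : T -> T; pb : T -> T;
  pfb : forall x, pf (pb x) = x; pbf : forall x, pb (pf x) = x }.
Arguments pf {T} p x.
Arguments pb {T} p x.
Arguments MkPerm {T}.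
Arguments pfb {T}.
Arguments pbf {T}.

Lemma perm_ext (T : Type) (p q : perm T) : (forall x, pf p x = pf q x) -> p = q.
Proof.
  intro E. destruct p as [f1 b1 e1 e2], q as [f2 b2 e3 e4]. simpl in E.
  assert (f1 = f2) by (apply functional_extensionality; auto). subst f2.
  assert (b1 = b2).
  { apply functional_extensionality. intro x. rewrite <- (e3 x) at 1. rewrite e2. reflexivity. }
  subst b2.
  rewrite (proof_irrelevance _ e1 e3), (proof_irrelevance _ e2 e4). reflexivity.
Qed.

Section Sym.
Variable T : Type.
Definition pmul (p q : perm T) : perm T.
refine (MkPerm (fun x => pf p (pf q x)) (fun x => pb q (pb p x)) _ _).
- intro x. rewrite pfb, pfb. reflexivity.
- intro x. rewrite pbf, pbf. reflexivity.
Defined.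
Definition pid : perm T := MkPerm (fun x => x) (fun x => x) (fun x => eq_refl) (fun x => eq_refl).
Definition pinv (p : perm T) : perm T := MkPerm (pb p) (pf p) (pbf p) (pfb p).
Definition Sym : Group.
refine (@MkGroup (perm T) pmul pid pinv _ _ _ _ _); intros; apply perm_ext; simpl; intros;
  rewrite ?pfb, ?pbf; reflexivity.
Defined.
End Sym.

Lemma generation (H : Group) (K : H -> Prop) (phi : H -> H) (G : Group) (i : H -> G) (t : G)
  (HN : is_HNN K phi i t) (S : G -> Prop) :
  S 1 -> (forall x y, S x -> S y -> S (x * y)) -> (forall x, S x -> S (x^-1)) ->
  (forall h, S (i h)) -> S t -> forall g, S g.
Proof.
  intros S1 SM SI Si St g.
  destruct HN as [Hi [Hrel Hu]].
  set (T := G -> Prop).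
  set (r1 := fun g : G => (MkPerm (fun (A : T) y => A (g^-1 * y)) (fun (A : T) y => A (g * y))
       (fun A => functional_extensionality _ _ (fun y => f_equal A (mulVK g y)))
       (fun A => functional_extensionality _ _ (fun y => f_equal A (mulKV g y)))) : Sym T).
  set (E := fun _ : G => False).
  set (tau0 := fun A : T => if excluded_middle_informative (A = S) then E
                  else if excluded_middle_informative (A = E) then S else A).
  assert (SE : S <> E). { intro e. assert (S 1) by auto. rewrite e in H0. exact H0. }
  assert (tS : tau0 S = E).
  { unfold tau0. repeat match goal with |- context [excluded_middle_informative ?P] => destruct (excluded_middle_informative P) end; congruence. }
  assert (tE : tau0 E = S).
  { unfold tau0. repeat match goal with |- context [excluded_middle_informative ?P] => destruct (excluded_middle_informative P) end; congruence. }
  assert (tA : forall A, A <> S -> A <> E -> tau0 A = A).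
  { intros A n1 n2. unfold tau0. repeat match goal with |- context [excluded_middle_informative ?P] => destruct (excluded_middle_informative P) end; congruence. }
  assert (tt : forall A, tau0 (tau0 A) = A).
  { intro A. destruct (classic (A = S)) as [e|n1]. { rewrite e, tS, tE. auto. }
    destruct (classic (A = E)) as [e|n2]. { rewrite e, tE, tS. auto. }
    rewrite (tA A n1 n2), (tA A n1 n2). auto. }
  set (tau := MkPerm tau0 tau0 tt tt : Sym T).
  assert (r1hom : is_hom r1).
  { intros x y. apply perm_ext. intro A. simpl. apply functional_extensionality. intro z.
    rewrite inv_mul, gmulA. reflexivity. }
  set (r2 := fun g => tau * r1 g * tau^-1).
  assert (r2hom : is_hom r2).
  { intros x y. unfold r2. rewrite r1hom. apply perm_ext. intro A. simpl. rewrite tt. reflexivity. }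
  assert (fixS : forall s, S s -> forall A : T, A = S <-> (pf (r1 s) A) = S).
  { intros s Ss A. simpl. split.
    - intro e. subst A. apply functional_extensionality. intro y. apply propositional_extensionality.
      split; intro Hy.
      + rewrite <- (mulVK s y). apply SM; auto.
      + apply SM; auto.
    - intro e. apply functional_extensionality. intro y. 
      assert (e2 := f_equal (fun B : T => B (s * y)) e). simpl in e2. rewrite mulKV in e2.
      rewrite e2. apply propositional_extensionality. split; intro Hy.
      + rewrite <- (mulKV s y). apply SM; auto.
      + apply SM; auto. }
  assert (fixE : forall s, forall A : T, A = E <-> (pf (r1 s) A) = E).
  { intros s A. simpl. split.
    - intro e. subst A. reflexivity.
    - intro e. apply functional_extensionality. intro y.
      assert (e2 := f_equal (fun B : T => B (s * y)) e). simpl in e2. rewrite mulKV in e2. exact e2. }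
  assert (comm : forall s, S s -> r2 s = r1 s).
  { intros s Ss. unfold r2. apply perm_ext. intro A. change (tau0 (pf (r1 s) (tau0 A)) = pf (r1 s) A).
    destruct (classic (A = S)) as [e|n1].
    - rewrite e. rewrite tS. assert (pf (r1 s) E = E) by (apply fixE; auto). rewrite H0, tE.
      symmetry. apply (fixS s Ss S). auto.
    - destruct (classic (A = E)) as [e|n2].
      + rewrite e. rewrite tE. assert (pf (r1 s) S = S) by (apply fixS; auto). rewrite H0, tS.
        symmetry. apply (fixE s E). auto.
      + rewrite (tA A n1 n2). apply tA.
        * intro e. apply n1. apply (fixS s Ss A). exact e.
        * intro e. apply n2. apply (fixE s A). exact e. }
  destruct (Hu (Sym T) (fun h => r1 (i h)) (r1 t)) as [F [_ [_ [_ Fu]]]].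
  { intros x y. rewrite Hi. apply r1hom. }
  { intros k Kk. rewrite <- !r1hom, <- hom_inv by exact r1hom. rewrite <- !r1hom. rewrite Hrel by auto. reflexivity. }
  assert (e1 := Fu r1 r1hom (fun h => eq_refl) eq_refl g).
  assert (e2 := Fu r2 r2hom (fun h => comm _ (Si h)) (comm _ St) g).
  rewrite <- e2 in e1.
  assert (e3 := f_equal (fun p => pf p E) e1).
  change (pf (r1 g) E = tau0 (pf (r1 g) (tau0 E))) in e3.
  rewrite tE in e3. assert (pf (r1 g) E = E) by (apply fixE; auto). rewrite H0 in e3.
  assert (e4 : pf (r1 g) S = S).
  { rewrite <- (tt (pf (r1 g) S)). rewrite <- e3. exact tE. }
  simpl in e4. assert (e5 := f_equal (fun B : T => B 1) e4). simpl in e5. rewrite gmul1r in e5.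
  rewrite <- e5 in S1. rewrite <- (inv_inv g). auto.
Qed.



Section NF.
Context (H : Group) (K : H -> Prop) (phi psi : H -> H).
Hypothesis HK : subgroup K.
Hypothesis Hphi : is_hom phi.
Hypothesis Hpsi1 : forall x, psi (phi x) = x.
Hypothesis Hpsi2 : forall x, phi (psi x) = x.

Lemma K1 : K 1. Proof. apply HK. Qed.
Lemma KM x y : K x -> K y -> K (x * y). Proof. apply HK. Qed.
Lemma KI x : K x -> K (x^-1). Proof. apply HK. Qed.

Lemma psi_hom : is_hom psi.
Proof. intros x y. rewrite <- (Hpsi2 x) at 1. rewrite <- (Hpsi2 y) at 1. rewrite <- Hphi. apply Hpsi1. Qed.

Definition Sg (e : bool) : H -> Prop := if e then image phi K else K.

Lemma Sg_sub e : subgroup (Sg e).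
Proof.
  destruct e; simpl; [|exact HK]. split; [|split].
  - exists 1. split; [apply K1|apply hom_one; auto].
  - intros x y [a [Ka <-]] [b [Kb <-]]. exists (a*b). split; [apply KM; auto|apply Hphi].
  - intros x [a [Ka <-]]. exists (a^-1). split; [apply KI; auto|apply hom_inv; auto].
Qed.
Lemma S1 e : Sg e 1. Proof. apply Sg_sub. Qed.
Lemma SM e x y : Sg e x -> Sg e y -> Sg e (x * y). Proof. apply Sg_sub. Qed.
Lemma SI e x : Sg e x -> Sg e (x^-1). Proof. apply Sg_sub. Qed.
Lemma SI' e x : Sg e (x^-1) -> Sg e x. Proof. intro. rewrite <- inv_inv. apply SI; auto. Qed.
Lemma SMl e x y : Sg e x -> Sg e (x * y) -> Sg e y.
Proof. intros a b. rewrite <- (mulKV x y). apply SM; auto. apply SI; auto. Qed.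

Definition rep (e : bool) (x : H) : H :=
  if excluded_middle_informative (Sg e x) then 1
  else epsilon (inhabits 1) (fun y => Sg e (x^-1 * y)).

Lemma R1 e x : Sg e (x^-1 * rep e x).
Proof.
  unfold rep. destruct (excluded_middle_informative (Sg e x)).
  - rewrite gmul1r. apply SI; auto.
  - apply epsilon_spec. exists x. rewrite gmulVl. apply S1.
Qed.
Lemma R1' e x : Sg e ((rep e x)^-1 * x).
Proof. assert (h := SI _ _ (R1 e x)). rewrite inv_mul, inv_inv in h. exact h. Qed.
Lemma R2 e x y : Sg e (x^-1 * y) -> rep e x = rep e y.
Proof.
  intro Hxy. unfold rep.
  assert (E : Sg e x <-> Sg e y).
  { split; intro h. - rewrite <- (mulVK x y). apply SM; auto.
    - apply SI'. replace (x^-1) with ((x^-1*y)*y^-1) by (gs; reflexivity). apply SM; auto. apply SI; auto. }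
  assert (P : (fun z => Sg e (x^-1 * z)) = (fun z => Sg e (y^-1 * z))).
  { apply functional_extensionality. intro z. apply propositional_extensionality. split; intro h.
    - replace (y^-1 * z) with ((x^-1 * y)^-1 * (x^-1 * z)). apply SM; auto. apply SI; auto.
      gs. reflexivity.
    - replace (x^-1 * z) with ((x^-1 * y) * (y^-1 * z)). apply SM; auto. gs. reflexivity. }
  rewrite P.
  destruct (excluded_middle_informative (Sg e x)), (excluded_middle_informative (Sg e y)); tauto.
Qed.
Lemma R3 e x : Sg e x -> rep e x = 1.
Proof. intro h. unfold rep. destruct (excluded_middle_informative (Sg e x)); tauto. Qed.
Lemma R4 e x : rep e x = 1 -> Sg e x.
Proof. intro h. assert (a := R1 e x). rewrite h, gmul1r in a. apply SI'; auto. Qed.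
Lemma Rid e x : rep e (rep e x) = rep e x.
Proof. symmetry. apply R2. apply R1. Qed.

Definition tr (e : bool) (m : H) : H := if e then psi m else phi m.
Lemma tr_hom e : is_hom (tr e).
Proof. destruct e; simpl; [apply psi_hom|apply Hphi]. Qed.
Lemma trS e m : Sg e m -> Sg (negb e) (tr e m).
Proof.
  destruct e; simpl.
  - intros [k [Kk <-]]. rewrite Hpsi1. auto.
  - intro. exists m. auto.
Qed.
Lemma tr1 e : tr e 1 = 1.
Proof. apply hom_one, tr_hom. Qed.

Definition L := list (H * bool).

Fixpoint actH (h : H) (l : L) : L * H :=
  match l with
  | [] => ([], h)
  | (c, e) :: rest =>
      let c' := rep e (h * c) in
      let p := actH (tr e (c'^-1 * (h * c))) rest in
      ((c', e) :: fst p, snd p)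
  end.

Lemma actH_cons h c e rest : actH h ((c, e) :: rest) =
  ((rep e (h * c), e) :: fst (actH (tr e ((rep e (h * c))^-1 * (h * c))) rest),
   snd (actH (tr e ((rep e (h * c))^-1 * (h * c))) rest)).
Proof. reflexivity. Qed.

Definition isone (c : H) : bool := if excluded_middle_informative (c = 1) then true else false.
Lemma isone_t c : isone c = true <-> c = 1.
Proof. unfold isone. destruct (excluded_middle_informative (c = 1)); split; congruence. Qed.
Lemma isone1 : isone 1 = true. Proof. apply isone_t. auto. Qed.

Definition actT (l : L) : L :=
  match l with
  | (c, false) :: rest => if isone c then rest else (1, true) :: l
  | _ => (1, true) :: l
  end.
Definition actTi (l : L) : L :=
  match l with
  | (c, true) :: rest => if isone c then rest else (1, false) :: l
  | _ => (1, false) :: l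
  end.

Definition okpair (e : bool) (rest : L) : Prop :=
  match rest with [] => True | (c2, e2) :: _ => ~ (c2 = 1 /\ e2 = negb e) end.

Fixpoint valid (l : L) : Prop :=
  match l with
  | [] => True
  | (c, e) :: rest => rep e c = c /\ valid rest /\ okpair e rest
  end.

Lemma actT_np l : (forall r, l <> (1, false) :: r) -> actT l = (1, true) :: l.
Proof.
  intro n. destruct l as [|[c [|]] r]; simpl; auto.
  destruct (isone c) eqn:E; auto. apply isone_t in E. subst. exfalso. apply (n r). auto.
Qed.
Lemma actTi_np l : (forall r, l <> (1, true) :: r) -> actTi l = (1, false) :: l.
Proof.
  intro n. destruct l as [|[c [|]] r]; simpl; auto.
  destruct (isone c) eqn:E; auto. apply isone_t in E. subst. exfalso. apply (n r). auto.
Qed.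

Lemma valid_actH h l : valid l -> valid (fst (actH h l)).
Proof.
  revert h. induction l as [|[c e] r IH]; intros h V; simpl; auto.
  destruct V as [Vc [Vr Vp]]. split; [apply Rid|]. split; [apply IH; auto|].
  destruct r as [|[c2 e2] r2]; simpl; auto.
  intros [E1 E2]. simpl in Vp. apply Vp. split; auto.
  subst e2. apply R4 in E1.
  assert (Sm := trS e _ (R1' e (h * c))).
  assert (Sc := SMl _ _ _ Sm E1).
  apply R3 in Sc. destruct Vr as [Vr _]. rewrite <- Vr. auto.
Qed.

Lemma valid_actT l : valid l -> valid (actT l).
Proof.
  intro V. destruct l as [|[c [|]] r].
  - simpl. split; [apply R3; apply S1|auto].
  - simpl. split; [apply R3; apply S1|]. split; auto. intros [_ E]; discriminate.
  - simpl. destruct (isone c) eqn:E.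
    + apply V.
    + simpl. split; [apply R3; apply S1|]. split; auto. intros [E1 _]. subst.
      rewrite isone1 in E. discriminate.
Qed.
Lemma valid_actTi l : valid l -> valid (actTi l).
Proof.
  intro V. destruct l as [|[c [|]] r].
  - simpl. split; [apply R3; apply S1|auto].
  - simpl. destruct (isone c) eqn:E.
    + apply V.
    + simpl. split; [apply R3; apply S1|]. split; auto. intros [E1 _]. subst.
      rewrite isone1 in E. discriminate.
  - simpl. split; [apply R3; apply S1|]. split; auto. intros [_ E]; discriminate.
Qed.

Lemma actT_Ti l : valid l -> actT (actTi l) = l.
Proof.
  intro V. destruct l as [|[c [|]] r].
  - simpl. rewrite isone1. auto.
  - simpl. destruct (isone c) eqn:E.
    + apply isone_t in E. subst c. apply actT_np. intros r' e. subst r.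
      destruct V as [_ [_ Vp]]. simpl in Vp. apply Vp. auto.
    + simpl. rewrite isone1. auto.
  - simpl. rewrite isone1. auto.
Qed.
Lemma actTi_T l : valid l -> actTi (actT l) = l.
Proof.
  intro V. destruct l as [|[c [|]] r].
  - simpl. rewrite isone1. auto.
  - simpl. rewrite isone1. auto.
  - simpl. destruct (isone c) eqn:E.
    + apply isone_t in E. subst c. apply actTi_np. intros r' e. subst r.
      destruct V as [_ [_ Vp]]. simpl in Vp. apply Vp. auto.
    + simpl. rewrite isone1. auto.
Qed.

Lemma actH_one l : valid l -> actH 1 l = (l, 1).
Proof.
  induction l as [|[c e] r IH]; intro V; simpl; auto.
  destruct V as [Vc [Vr _]]. rewrite gmul1l, Vc, gmulVl, tr1, IH; auto.
Qed.

Lemma actH_mul l : forall h h', actH (h * h') l =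
  (fst (actH h (fst (actH h' l))), snd (actH h (fst (actH h' l))) * snd (actH h' l)).
Proof.
  induction l as [|[c e] r IH]; intros h h'; simpl; auto.
  assert (E : rep e (h * h' * c) = rep e (h * rep e (h' * c))).
  { apply R2. replace ((h * h' * c)^-1 * (h * rep e (h' * c))) with ((h' * c)^-1 * rep e (h' * c)).
    apply R1. gs. reflexivity. }
  rewrite E. 
  replace ((rep e (h * rep e (h' * c)))^-1 * (h * h' * c)) with
    (((rep e (h * rep e (h' * c)))^-1 * (h * rep e (h' * c))) * ((rep e (h' * c))^-1 * (h' * c)))
    by (gs; reflexivity).
  rewrite tr_hom, IH. reflexivity.
Qed.

Context (G : Group) (i : H -> G) (t : G).
Hypothesis HN : is_HNN K phi i t.

Lemma ihom : is_hom i. Proof. apply HN. Qed.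
Lemma irel k : K k -> t * i k * t^-1 = i (phi k). Proof. apply HN. Qed.

Definition tp (e : bool) : G := if e then t else t^-1.

Lemma key e m : Sg e m -> tp e * i (tr e m) = i m * tp e.
Proof.
  destruct e; simpl.
  - intros [k [Kk <-]]. rewrite Hpsi1. rewrite <- (irel k Kk). gs. reflexivity.
  - intro Km. rewrite <- (irel m Km). gs. reflexivity.
Qed.

Fixpoint evalL (l : L) : G :=
  match l with [] => 1 | (c, e) :: r => i c * tp e * evalL r end.

Lemma evalH h l : evalL (fst (actH h l)) * i (snd (actH h l)) = i h * evalL l.
Proof.
  revert h. induction l as [|[c e] r IH]; intro h; simpl.
  - gs. reflexivity.
  - rewrite <- gmulA, IH. rewrite gmulA, <- (gmulA (i _)), key by apply R1'.
    rewrite gmulA, <- ihom, mulVK, ihom. gs. reflexivity.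
Qed.

Lemma evalT l : evalL (actT l) = t * evalL l.
Proof.
  destruct l as [|[c [|]] r]; simpl; try (rewrite (hom_one _ _ _ ihom); gs; reflexivity).
  destruct (isone c) eqn:E; simpl.
  - apply isone_t in E. subst. rewrite (hom_one _ _ _ ihom). gs. reflexivity.
  - rewrite (hom_one _ _ _ ihom). gs. reflexivity.
Qed.
Lemma evalTi l : evalL (actTi l) = t^-1 * evalL l.
Proof.
  destruct l as [|[c [|]] r]; simpl; try (rewrite (hom_one _ _ _ ihom); gs; reflexivity).
  destruct (isone c) eqn:E; simpl.
  - apply isone_t in E. subst. rewrite (hom_one _ _ _ ihom). gs. reflexivity.
  - rewrite (hom_one _ _ _ ihom). gs. reflexivity.
Qed.

Definition Om := {l : L | valid l}.
Definition X : Type := (Om * H)%type.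

Definition actHX (h : H) (p : X) : X :=
  (exist valid (fst (actH h (proj1_sig (fst p)))) (valid_actH h _ (proj2_sig (fst p))),
   snd (actH h (proj1_sig (fst p))) * snd p).
Definition actTX (p : X) : X :=
  (exist valid (actT (proj1_sig (fst p))) (valid_actT _ (proj2_sig (fst p))), snd p).
Definition actTiX (p : X) : X :=
  (exist valid (actTi (proj1_sig (fst p))) (valid_actTi _ (proj2_sig (fst p))), snd p).

Lemma X_eq (p q : X) : proj1_sig (fst p) = proj1_sig (fst q) -> snd p = snd q -> p = q.
Proof.
  destruct p as [[l v] x], q as [[l' v'] x']; simpl; intros; subst.
  rewrite (proof_irrelevance _ v v'). reflexivity.
Qed.

Lemma actH_mul1 l h h' : fst (actH h (fst (actH h' l))) = fst (actH (h * h') l).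
Proof. rewrite actH_mul. reflexivity. Qed.
Lemma actH_mul2 l h h' : snd (actH h (fst (actH h' l))) * snd (actH h' l) = snd (actH (h * h') l).
Proof. rewrite actH_mul. reflexivity. Qed.

Lemma actHX_inv h p : actHX h (actHX (h^-1) p) = p.
Proof.
  destruct p as [[l v] x]. apply X_eq; simpl.
  - rewrite actH_mul1, gmulVr, actH_one; auto.
  - rewrite gmulA, actH_mul2, gmulVr, actH_one; auto. simpl. apply gmul1l.
Qed.

Definition permH (h : H) : Sym X.
refine (MkPerm (actHX h) (actHX (h^-1)) _ _).
- intro p. apply actHX_inv.
- intro p. rewrite <- (inv_inv h) at 2. apply actHX_inv.
Defined.

Definition permT : Sym X.
refine (MkPerm actTX actTiX _ _).
- intros [[l v] x]. apply X_eq; simpl; auto. apply actT_Ti; auto.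
- intros [[l v] x]. apply X_eq; simpl; auto. apply actTi_T; auto.
Defined.

Lemma permH_hom : is_hom permH.
Proof.
  intros h h'. apply perm_ext. intros [[l v] x]. apply X_eq; simpl.
  - symmetry. apply actH_mul1.
  - rewrite gmulA, actH_mul2. reflexivity.
Qed.

Lemma rel_list l k : valid l -> K k ->
  actT (fst (actH k (actTi l))) = fst (actH (phi k) l) /\
  snd (actH k (actTi l)) = snd (actH (phi k) l).
Proof.
  intros V Kk. destruct (classic (exists r, l = (1, true) :: r)) as [[r e]|n].
  - subst l. simpl actTi. rewrite isone1. rewrite actH_cons.
    rewrite (R3 true (phi k * 1)) by (exists k; split; auto; gs; reflexivity).
    replace (tr true (1^-1 * (phi k * 1))) with k by (simpl; gs; rewrite Hpsi1; reflexivity).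
    simpl. split; auto. apply actT_np. intros r' E.
    destruct V as [_ [Vr Vp]]. destruct r as [|[c2 e2] r2]; simpl in E; [discriminate|].
    injection E as E1 E2 E3. subst e2. apply R4 in E1. simpl in E1.
    assert (K c2) by (apply (SMl false k); auto).
    destruct Vr as [Vc2 _]. rewrite (R3 false c2) in Vc2 by auto. simpl in Vp. apply Vp. auto.
  - rewrite actTi_np by (intros r e; apply n; exists r; auto).
    rewrite actH_cons.
    rewrite (R3 false (k * 1)) by (simpl; gs; auto).
    replace (tr false (1^-1 * (k * 1))) with (phi k) by (simpl; gs; reflexivity).
    simpl. rewrite isone1. auto.
Qed.

Lemma perm_rel k : K k -> permT * permH k * permT^-1 = permH (phi k).
Proof.
  intro Kk. apply perm_ext. intros [[l v] x]. apply X_eq; simpl.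
  - apply rel_list; auto.
  - f_equal. apply rel_list; auto.
Qed.

Definition evalX (p : X) : G := evalL (proj1_sig (fst p)) * i (snd p).
Definition o : X := (exist valid [] I, 1).

Context (F : G -> Sym X).
Hypothesis HF : is_hom F.
Hypothesis HFi : forall h, F (i h) = permH h.
Hypothesis HFt : F t = permT.

Lemma eval_all : forall g p, evalX (pf (F g) p) = g * evalX p.
Proof.
  apply (generation H K phi G i t HN (fun g => forall p, evalX (pf (F g) p) = g * evalX p)).
  - intro p. rewrite (hom_one _ _ _ HF). simpl. gs. reflexivity.
  - intros x y Sx Sy p. rewrite HF. simpl. rewrite Sx, Sy. apply gmulA.
  - intros x Sx p. rewrite (hom_inv _ _ _ _ HF). simpl.
    assert (E := Sx (pb (F x) p)). rewrite pfb in E. rewrite E. gs. reflexivity.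
  - intros h p. rewrite HFi. destruct p as [[l v] x]. unfold evalX; simpl.
    rewrite ihom, gmulA, evalH. gs. reflexivity.
  - intro p. rewrite HFt. destruct p as [[l v] x]. unfold evalX; simpl.
    rewrite evalT. gs. reflexivity.
Qed.

Lemma N_eval : forall l (v : valid l) x, pf (F (evalL l * i x)) o = (exist valid l v, x).
Proof.
  induction l as [|[c e] r IH]; intros v x.
  - simpl. rewrite gmul1l, HFi. apply X_eq; simpl; auto. apply gmul1r.
  - destruct v as [Vc [Vr Vp]]. simpl evalL.
    replace (i c * tp e * evalL r * i x) with (i c * (tp e * (evalL r * i x))) by (gs; reflexivity).
    rewrite HF, HF. simpl pf at 1. rewrite HFi.
    assert (E : pf (F (tp e)) (pf (F (evalL r * i x)) o) =
                (exist valid ((1, e) :: r) (conj (R3 e 1 (S1 e)) (conj Vr Vp)), x)).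
    { rewrite (IH Vr x). apply X_eq; simpl; auto.
      - destruct e; simpl.
        + rewrite HFt. simpl. apply actT_np. intros r' E. subst r. simpl in Vp. apply Vp. auto.
        + rewrite (hom_inv _ _ _ _ HF), HFt. simpl. apply actTi_np. intros r' E. subst r.
          simpl in Vp. apply Vp. auto.
      - destruct e; simpl; [rewrite HFt|rewrite (hom_inv _ _ _ _ HF), HFt]; reflexivity. }
    change (pf (F (tp e)) (pf (F (evalL r * i x)) o)) with (pf (F (tp e)) (pf (F (evalL r * i x)) o)).
    simpl pf. rewrite E. apply X_eq; simpl.
    + rewrite gmul1r, Vc, gmulVl, tr1, actH_one; auto.
    + rewrite gmul1r, Vc, gmulVl, tr1, actH_one; auto. simpl. apply gmul1l.
Qed.

Lemma evalX_o : evalX o = 1.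
Proof. unfold evalX. simpl. rewrite (hom_one _ _ _ ihom). apply gmul1l. Qed.

Lemma i_inj h h' : i h = i h' -> h = h'.
Proof.
  intro E. assert (E2 := f_equal (fun g => snd (pf (F g) o)) E). simpl in E2.
  rewrite !HFi in E2. simpl in E2. rewrite !gmul1r in E2. exact E2.
Qed.

Lemma fixed_nil (h0 : H) : ~ K h0 -> forall l, valid l -> (forall h, fst (actH h l) = l) -> l = [].
Proof.
  intros nK l V Fx. destruct l as [|[c e] r]; auto. exfalso.
  assert (ex : exists s, ~ Sg e s).
  { destruct e; simpl.
    - exists (phi h0). intros [k [Kk E]]. apply nK. rewrite <- (Hpsi1 h0), <- E, Hpsi1. auto.
    - exists h0. auto. }
  destruct ex as [s ns].
  assert (E := Fx (c * s * c^-1)). rewrite actH_cons in E. injection E as E1 _.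
  replace (c * s * c^-1 * c) with (c * s) in E1 by (gs; reflexivity).
  assert (a := R1 e (c * s)). rewrite E1 in a. apply ns. apply SI'.
  replace (s^-1) with ((c * s)^-1 * c) by (gs; reflexivity). auto.
Qed.

Lemma F1 (h0 : H) : ~ K h0 -> forall W, (forall h, W * i h = i h * W) -> exists x, W = i x.
Proof.
  intros nK W C.
  destruct (pf (F W) o) as [[l v] x] eqn:EW.
  assert (EvW : W = evalL l * i x).
  { assert (a := eval_all W o). rewrite evalX_o, gmul1r, EW in a. unfold evalX in a. simpl in a. auto. }
  assert (l = []).
  { apply (fixed_nil h0 nK l v). intro h.
    assert (a := N_eval l v (x * h)).
    rewrite ihom, gmulA, <- EvW, C, HF in a. simpl in a. rewrite EW, HFi in a. simpl in a.
    apply (f_equal (fun p => proj1_sig (fst p))) in a. simpl in a. exact a. }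
  subst l. exists x. rewrite EvW. apply gmul1l.
Qed.

Lemma F2 u v : t * i u * t^-1 = i v -> K u.
Proof.
  intro E. assert (E2 := f_equal (fun g => proj1_sig (fst (pf (F g) o))) E). simpl in E2.
  rewrite !HF, (hom_inv _ _ _ _ HF), HFt, HFi, HFi in E2. simpl in E2.
  destruct (isone (rep false (u * 1))) eqn:E3.
  - apply isone_t in E3. apply R4 in E3. simpl in E3. rewrite gmul1r in E3. auto.
  - discriminate.
Qed.

End NF.



Lemma britton (H : Group) (K : H -> Prop) (phi : H -> H) (G : Group) (i : H -> G) (t : G) :
  proper_subgroup K -> is_aut phi -> is_HNN K phi i t ->
  (forall h h', i h = i h' -> h = h') /\
  (forall W, (forall h, W * i h = i h * W) -> exists x, W = i x) /\
  (forall u v, t * i u * t^-1 = i v -> K u).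
Proof.
  intros [HK [h0 nh0]] [Hphi [psi [Hp1 Hp2]]] HN.
  destruct HN as [Hi [Hrel Hu]] eqn:EHN.
  destruct (Hu (Sym (X H K phi)) (permH H K phi psi HK Hphi Hp1 Hp2) (permT H K phi HK Hphi))
    as [F [HF [HFi [HFt _]]]].
  { apply permH_hom. }
  { intros k Kk. apply perm_rel. auto. }
  split; [|split].
  - exact (i_inj H K phi psi HK Hphi Hp1 Hp2 G i F HFi).
  - exact (F1 H K phi psi HK Hphi Hp1 Hp2 G i t HN F HF HFi HFt h0 nh0).
  - exact (F2 H K phi psi HK Hphi Hp1 Hp2 G i t F HF HFi HFt).
Qed.

Section Cen.
Context {H : Group}.
Lemma center_inv (c : H) : center c -> center (c^-1).
Proof. intros Cc h. apply (mulcl c). rewrite mulVK, gmulA, Cc, mulKVr. reflexivity. Qed.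
Lemma cc1 (c x : H) : center c -> c * x * c^-1 = x.
Proof. intro Cc. rewrite Cc, mulKVr. reflexivity. Qed.
Lemma cc2 (c x : H) : center c -> c^-1 * x * c = x.
Proof. intro Cc. rewrite <- (inv_inv c) at 2. apply cc1, center_inv; auto. Qed.
Lemma center_mul (c d : H) : center c -> center d -> center (c * d).
Proof. intros Cc Cd h. rewrite <- gmulA, Cd, gmulA, Cc, gmulA. reflexivity. Qed.
Lemma center1 : center (1 : H).
Proof. intro h. rewrite gmul1l, gmul1r. reflexivity. Qed.
End Cen.



Theorem lemma4p4 (H : Group) (K : H -> Prop) (phi : H -> H)
  (G : Group) (i : H -> G) (t : G) :
  proper_subgroup K -> is_aut phi -> is_HNN K phi i t ->
  (forall b a alpha b' a' alpha',
     in_V K phi i t b a alpha -> in_V K phi i t b' a' alpha' ->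
     same_outer alpha alpha' -> same_cosetZK K b b') /\
  (forall b a alpha b' a' alpha',
     in_V K phi i t b a alpha -> in_V K phi i t b' a' alpha' ->
     (exists b'' a'' beta, in_V K phi i t b'' a'' beta /\
        same_outer (comp_lr alpha alpha') beta) /\
     (forall b'' a'' beta, in_V K phi i t b'' a'' beta ->
        same_outer (comp_lr alpha alpha') beta -> same_cosetZK K (b * b') b'')) /\
  (forall n, normalizer K n ->
     exists b a alpha, in_V K phi i t b a alpha /\ same_cosetZK K b n) /\
  (forall b a alpha, in_V K phi i t b a alpha ->
     (same_cosetZK K b 1 <->
      exists a' alpha', centralizer (image phi K) a' /\
        is_alpha i t (fun h => h) a' alpha' /\ same_outer alpha alpha')).
Proof.
  intros HPK HAphi HN.
  destruct (britton H K phi G i t HPK HAphi HN) as [iinj [FF1 FF2]].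
  destruct HPK as [HK [h0 nh0]].
  destruct HAphi as [Hphi [psi [Hp1 Hp2]]].
  assert (ihom : is_hom i) by apply HN.
  assert (irel : forall k, K k -> t * i k * t^-1 = i (phi k)) by apply HN.
  assert (Tk : forall k, K k -> t * i k = i (phi k) * t).
  { intros k Kk. rewrite <- irel by auto. gs. reflexivity. }
  assert (ihinv : forall x, i (x^-1) = (i x)^-1) by (intro; apply hom_inv; auto).
  assert (phinv : forall x, phi (x^-1) = (phi x)^-1) by (intro; apply hom_inv; auto).
  assert (phcen : forall z, center z -> center (phi z)).
  { intros z Cz y. rewrite <- (Hp2 y), <- !Hphi, Cz. reflexivity. }
  assert (WD : forall b a alpha b' a' alpha',
     in_V K phi i t b a alpha -> in_V K phi i t b' a' alpha' ->
     same_outer alpha alpha' -> same_cosetZK K b b').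
  { intros b a alpha b' a' alpha' [Nb [Cb [Aut [Ai At]]]] [Nb' [Cb' [Aut' [Ai' At']]]] [g Eg].
    set (W := i b * g * (i b')^-1).
    assert (CW : forall h, W * i h = i h * W).
    { intro h. assert (E1 := Eg (i h)). rewrite Ai, Ai' in E1. unfold gamma in E1.
      rewrite !ihom, !ihinv in E1. unfold W.
      replace (i b * g * (i b')^-1 * i h) with (i b * g * ((i b')^-1 * i h * i b') * (i b')^-1)
        by (gs; reflexivity).
      rewrite E1. gs. reflexivity. }
    destruct (FF1 W CW) as [x Ex].
    assert (Cx : center x).
    { intro h. apply iinj. rewrite !ihom, <- Ex. apply CW. }
    set (u := x * (b^-1 * b')).
    assert (Eg2 : g = i u).
    { unfold u. rewrite !ihom, ihinv.
      replace (i x * ((i b)^-1 * i b')) with (i x * i (b^-1) * i b') by (rewrite ihinv; gs; reflexivity).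
      rewrite <- Ex, CW, ihinv. unfold W. gs. reflexivity. }
    assert (E2 := Eg t). rewrite At, At', Eg2 in E2.
    assert (Ku : K u).
    { apply (FF2 u (a^-1 * u * a')). rewrite !ihom, ihinv.
      replace ((i a)^-1 * i u * i a') with ((i a)^-1 * i u * (i a' * t) * t^-1) by (gs; reflexivity).
      rewrite E2. gs. reflexivity. }
    exists (x^-1), u. split; [apply center_inv; auto|]. split; auto.
    unfold u. gs. reflexivity. }
  split; [exact WD|].
  split; [|split].
  -
    intros b a alpha b' a' alpha' Vb Vb'.
    assert (Vc : in_V K phi i t (b * b') (b'^-1 * a * b' * a') (comp_lr alpha alpha')).
    { destruct Vb as [Nb [Cb [[Ahom [ainv [Ai1 Ai2]]] [Ai At]]]].
      destruct Vb' as [Nb' [Cb' [[Ahom' [ainv' [Ai1' Ai2']]] [Ai' At']]]].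
      split; [|split].
      - intro k. replace ((b * b')^-1 * k * (b * b')) with (b'^-1 * (b^-1 * k * b) * b') by (gs; reflexivity).
        split; intro h.
        + apply (proj1 (Nb' (b^-1 * k * b))). apply (proj1 (Nb k)). auto.
        + apply (proj2 (Nb k)). apply (proj2 (Nb' (b^-1 * k * b))). auto.
      - intros s [k [Kk Es]].
        set (P := phi b). set (C' := b' * a' * (phi b')^-1).
        replace (b * b' * (b'^-1 * a * b' * a') * (phi (b * b'))^-1)
          with (b * a * P^-1 * (P * C' * P^-1))
          by (unfold P, C'; rewrite Hphi; gs; reflexivity).
        assert (Ds : P * C' * P^-1 * s = s * (P * C' * P^-1)).
        { set (s' := P^-1 * s * P).
          assert (Hs' : image phi K s').
          { exists (b^-1 * k * b). split; [apply (proj1 (Nb k)); auto|].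
            unfold s', P. rewrite !Hphi, phinv, Es. reflexivity. }
          replace (P * C' * P^-1 * s) with (P * (C' * s') * P^-1) by (unfold s'; gs; reflexivity).
          unfold C'. rewrite (Cb' s' Hs'). unfold s'. gs. reflexivity. }
        rewrite <- gmulA, Ds, gmulA. unfold P. rewrite (Cb s) by (exists k; auto). rewrite <- gmulA. reflexivity.
      - split; [split; [|exists (fun x => ainv (ainv' x)); split]|split].
        + intros x y. unfold comp_lr. rewrite Ahom, Ahom'. reflexivity.
        + intro x. unfold comp_lr. rewrite Ai1', Ai1. reflexivity.
        + intro x. unfold comp_lr. rewrite Ai2, Ai2'. reflexivity.
        + intro h. unfold comp_lr. rewrite Ai, Ai'. f_equal. unfold gamma. gs. reflexivity.
        + unfold comp_lr. rewrite At, Ahom', Ai', At'. unfold gamma.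
          rewrite !ihom. gs. reflexivity. }
    split.
    + exists (b * b'), (b'^-1 * a * b' * a'), (comp_lr alpha alpha'). split; auto.
      exists 1. intro x. gs. reflexivity.
    + intros b'' a'' beta Vb'' So. apply (WD _ _ _ _ _ _ Vc Vb'' So).
  -
    assert (mk : forall m, normalizer K m -> exists F : G -> G, is_hom F /\
               (forall h, F (i h) = i (gamma m h)) /\ F t = i (m^-1 * phi m) * t).
    { intros m Nm. destruct HN as [_ [_ Hu]].
      destruct (Hu G (fun h => i (gamma m h)) (i (m^-1 * phi m) * t)) as [F [HF [HFi [HFt _]]]].
      - intros x y. rewrite <- ihom. f_equal. unfold gamma. gs. reflexivity.
      - intros k Kk.
        replace (i (m^-1 * phi m) * t * i (gamma m k) * (i (m^-1 * phi m) * t)^-1)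
          with (i (m^-1 * phi m) * (t * i (gamma m k) * t^-1) * (i (m^-1 * phi m))^-1) by (gs; reflexivity).
        rewrite irel by (apply (proj1 (Nm k)); auto).
        rewrite <- ihinv, <- !ihom. f_equal. unfold gamma. rewrite !Hphi, !phinv. gs. reflexivity.
      - exists F. auto. }
    intros n Nn.
    assert (Nn' : normalizer K (n^-1)).
    { intro k. split; intro h.
      - apply Nn. replace (n^-1 * (n^-1^-1 * k * n^-1) * n) with k by (gs; reflexivity). auto.
      - apply Nn in h. replace (n^-1 * (n^-1^-1 * k * n^-1) * n) with k in h by (gs; reflexivity). auto. }
    destruct (mk n Nn) as [F [HF [HFi HFt]]].
    destruct (mk (n^-1) Nn') as [F' [HF' [HFi' HFt']]].
    destruct HN as [_ [_ Hu]].
    destruct (Hu G i t) as [F0 [_ [_ [_ Fu]]]].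
    { exact ihom. }
    { exact irel. }
    assert (Fid : forall g, g = F0 g) by (apply (Fu (fun g => g)); [intros x y; reflexivity|auto|auto]).
    assert (inv1 : forall g, F' (F g) = g).
    { intro g. rewrite (Fu (fun g => F' (F g))), <- Fid; auto.
      - intros x y. rewrite HF, HF'. reflexivity.
      - intro h. rewrite HFi, HFi'. f_equal. unfold gamma. gs. reflexivity.
      - rewrite HFt, HF', HFi', HFt', gmulA, <- ihom.
        replace (gamma (n^-1) (n^-1 * phi n) * (n^-1^-1 * phi (n^-1))) with (1 : H).
        + rewrite (hom_one _ _ _ ihom). apply gmul1l.
        + unfold gamma. rewrite phinv. gs. reflexivity. }
    assert (inv2 : forall g, F (F' g) = g).
    { intro g. rewrite (Fu (fun g => F (F' g))), <- Fid; auto.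
      - intros x y. rewrite HF', HF. reflexivity.
      - intro h. rewrite HFi', HFi. f_equal. unfold gamma. gs. reflexivity.
      - rewrite HFt', HF, HFi, HFt, gmulA, <- ihom.
        replace (gamma n (n^-1^-1 * phi (n^-1)) * (n^-1 * phi n)) with (1 : H).
        + rewrite (hom_one _ _ _ ihom). apply gmul1l.
        + unfold gamma. rewrite phinv. gs. reflexivity. }
    exists n, (n^-1 * phi n), F. split.
    + split; [auto|split].
      * intros s _. replace (n * (n^-1 * phi n) * (phi n)^-1) with (1 : H) by (gs; reflexivity).
        rewrite gmul1l, gmul1r. reflexivity.
      * split; [split; [auto|exists F'; split; auto]|split; auto].
    + exists 1, 1. split; [apply center1|]. split; [apply HK|]. gs. reflexivity.
  -
    intros b a alpha Vb. split.
    + intros [z [k [Cz [Kk E]]]].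
      destruct Vb as [Nb [Cb [[Ahom [ainv [Ai1 Ai2]]] [Ai At]]]].
      rewrite gmul1r in E.
      assert (Eb : b = (z * k)^-1) by (rewrite <- E; gs; reflexivity).
      subst b.
      set (g0 := (i (k^-1))^-1).
      exists (k^-1 * a * phi k), (fun x => g0^-1 * alpha x * g0).
      split; [|split; [split; [split; [|exists (fun y => ainv (g0 * y * g0^-1)); split]|split]|]].
      * intros s Hs.
        set (w := z^-1 * phi z).
        assert (Cw : center w) by (apply center_mul; [apply center_inv; auto|apply phcen; auto]).
        assert (Ea : k^-1 * a * phi k = w^-1 * ((z * k)^-1 * a * (phi ((z * k)^-1))^-1)).
        { rewrite phinv, inv_inv, Hphi. unfold w.
          replace ((z^-1 * phi z)^-1 * ((z * k)^-1 * a * (phi z * phi k)))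
            with ((phi z)^-1 * ((z * k^-1 * z^-1) * a) * phi z * phi k) by (gs; reflexivity).
          rewrite (cc1 z (k^-1)) by auto. rewrite (cc2 (phi z)) by (apply phcen; auto). reflexivity. }
        rewrite Ea, <- gmulA, (Cb s Hs), !gmulA, (center_inv w Cw s). reflexivity.
      * intros x y. rewrite Ahom. gs. reflexivity.
      * intro x. replace (g0 * (g0^-1 * alpha x * g0) * g0^-1) with (alpha x) by (gs; reflexivity).
        apply Ai1.
      * intro y. rewrite Ai2. gs. reflexivity.
      * intro h. rewrite Ai. unfold g0, gamma. rewrite inv_inv.
        replace ((z * k)^-1^-1 * h * (z * k)^-1) with (z * (k * h * k^-1) * z^-1) by (gs; reflexivity).
        rewrite (cc1 z) by auto. rewrite <- ihinv, <- !ihom. f_equal. gs. reflexivity.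
      * rewrite At. unfold g0. rewrite inv_inv, !ihinv, inv_inv.
        replace ((i k)^-1 * (i a * t) * i k) with ((i k)^-1 * i a * (t * i k)) by (gs; reflexivity).
        rewrite Tk by auto. rewrite !ihom, ihinv. gs. reflexivity.
      * exists g0. intro x. reflexivity.
    + intros [a' [alpha' [Ca' [[Aut' [Ai' At']] So]]]].
      apply (WD b a alpha 1 a' alpha'); auto.
      split; [|split].
      * intro k. replace (1^-1 * k * 1) with k by (gs; reflexivity). tauto.
      * rewrite (hom_one _ _ _ Hphi), inv_one, gmul1l, gmul1r. auto.
      * split; auto. split; auto. intro h. rewrite Ai'. f_equal. unfold gamma. gs. reflexivity.
Qed.
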